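(* There is a constant $c>0$ such that for every $\alpha\in(0,\tfrac12)$ there is $\nu^*(\alpha)$ with the following property: for every $\nu>\nu^*(\alpha)$, all sufficiently large $n$, every admissible pair $(i,j)$ and every $t\ge 0$, $$\mathbb P(D_{i,j}\ge t)\le e^{-ct}.$$
   Context: KPKVB setting: fix $\alpha>0$, $\nu>0$, an integer $n>\nu$, and $R=2\ln(n/\nu)$. $\mathcal D_R$ is the hyperbolic disk (curvature $-1$) of radius $R$ around the origin, with polar coordinates $(r,\theta)$, $r\in[0,R)$, $\theta\in(0,2\pi]$; $f_{\alpha,R}(r,\theta)=\frac{\alpha\sinh(\alpha r)}{2\pi(\cosh(\alpha R)-1)}$. $\mathcal P$ is a Poisson point process on $\mathcal D_R$ with intensity measure $n f_{\alpha,R}(r,\theta)\,dr\,d\theta$ (the vertex set of $G_{\mathrm{Po}}(n;\alpha,\nu)$). Tiling: $i_{\max}=\lceil 0.9R/(2\ln 2)\rceil$, $n_i=2^{4-i+\lfloor R/(2\ln 2)\rfloor}$ for integers $0\le i\le i_{\max}$; $(i,j)$ is admissible if $0\le i\le i_{\max}$, $0\le j<n_i$; $T_{i,j}=\{(r,\theta)\in\mathcal D_R:\ R-2(i+1)\ln 2\le r<R-2i\ln 2,\ 2\pi j/n_i<\theta\le 2\pi(j+1)/n_i\}$. $N(T_{i,j})=|\mathcal P\cap T_{i,j}|$. Demands: $D_{0,j}=N(T_{0,j})$ if $N(T_{0,j})\in\{1,2\}$ and $D_{0,j}=0$ otherwise; for $0<i\le i_{\max}$, $D_{i,j}=\max\{D_{i-1,2j}+D_{i-1,2j+1}+3-N(T_{i,j}),0\}$.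 *)

(* Defs.v *)
From Stdlib Require Import Reals Lra Lia ZArith Arith List.
Open Scope R_scope.

Definition Rad (nu : R) (n : nat) : R := 2 * ln (INR n / nu).

(** floor and ceiling (Int_part x = up x - 1 is the floor). *)
Definition Rfloor (x : R) : Z := Int_part x.
Definition Rceil (x : R) : Z := (- Int_part (- x))%Z.

Definition imax (nu : R) (n : nat) : Z :=
  Rceil (9 / 10 * Rad nu n / (2 * ln 2)).

(** n_i = 2^(4 - i + floor(R / (2 ln 2))) (a positive integer for admissible i). *)
Definition ntiles (nu : R) (n : nat) (i : nat) : nat :=
  Nat.pow 2 (Z.to_nat (4 - Z.of_nat i + Rfloor (Rad nu n / (2 * ln 2)))%Z).

Definition admissible (nu : R) (n : nat) (i j : nat) : Prop :=
  (Z.of_nat i <= imax nu n)%Z /\ (j < ntiles nu n i)%nat.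

(** Expected number of points of P in T_{i,j}:
    n * \int_{T_{i,j}} f_{alpha,R}(r,theta) dr dtheta, where the radial range
    [R - 2(i+1) ln 2, R - 2 i ln 2) is intersected with [0,R), the angular width
    is 2 pi / n_i, and \int alpha sinh(alpha r) dr = cosh(alpha r). *)
Definition tile_mean (alpha nu : R) (n : nat) (i : nat) : R :=
  let RR := Rad nu n in
  let r2 := Rmax 0 (RR - 2 * INR i * ln 2) in
  let r1 := Rmax 0 (RR - 2 * (INR i + 1) * ln 2) in
  INR n * (cosh (alpha * r2) - cosh (alpha * r1))
    / (INR (ntiles nu n i) * (cosh (alpha * RR) - 1)).

Definition pois (mu : R) (k : nat) : R := exp (- mu) * mu ^ k / INR (fact k).

(** A configuration assigns a count N i j = N(T_{i,j}) to each tile. *)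
Definition config := nat -> nat -> nat.

(** The demands D_{i,j} as a function of the tile counts
    (nat truncated subtraction = max{.,0}). *)
Fixpoint demand (N : config) (i j : nat) : nat :=
  match i with
  | O => if orb (Nat.eqb (N 0%nat j) 1) (Nat.eqb (N 0%nat j) 2) then N 0%nat j else 0%nat
  | S i' => (demand N i' (2 * j) + demand N i' (2 * j + 1) + 3 - N i j)%nat
  end.

Definition subtree (i j : nat) : list (nat * nat) :=
  flat_map (fun i' => map (fun j' => (i', j'))
                          (seq (j * Nat.pow 2 (i - i')) (Nat.pow 2 (i - i'))))
           (seq 0 (S i)).

Definition update (N : config) (a b k : nat) : config :=
  fun x y => if andb (Nat.eqb x a) (Nat.eqb y b) then k else N x y.

(** Sum over all assignments of counts in {0..K} to the listed tiles, each
    weighted by the (independent) Poisson probability with mean mu tile. *)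
Fixpoint cfg_sum (mu : nat -> nat -> R) (K : nat) (F : config -> R)
         (tiles : list (nat * nat)) (N : config) : R :=
  match tiles with
  | nil => F N
  | (a, b) :: rest =>
      sum_f_R0 (fun k => pois (mu a b) k * cfg_sum mu K F rest (update N a b k)) K
  end.

(** P(D_{i,j} >= t, and all counts in the subtree are <= K).  As K -> oo this
    increases to P(D_{i,j} >= t), since the counts N(T_{i',j'}) of the Poisson
    process in the disjoint tiles are independent Poisson variables with
    means tile_mean. *)
Definition prob_trunc (alpha nu : R) (n : nat) (i j : nat) (t : R) (K : nat) : R :=
  cfg_sum (fun a _ => tile_mean alpha nu n a) K
          (fun N => if Rle_dec t (INR (demand N i j)) then 1 else 0)
          (subtree i j) (fun _ _ => 0%nat).

Definition prob_demand_ge_le (alpha nu : R) (n : nat) (i j : nat) (t b : R) : Prop :=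
  forall K : nat, prob_trunc alpha nu n i j t K <= b.

(* Main.v *)
Require Import Defs.
From Stdlib Require Import Reals Lra Lia ZArith Arith List Permutation FunctionalExtensionality.
Open Scope R_scope.

Lemma exp_partial (y : R) (K : nat) : 0 <= y ->
  sum_f_R0 (fun k => / INR (fact k) * y ^ k) K <= exp y.
Proof.
  intro Hy.
  apply (growing_ineq (fun n => sum_f_R0 (fun k => / INR (fact k) * y ^ k) n)).
  - intro n. cbv beta. rewrite tech5. assert (0 <= / INR (fact (S n)) * y ^ S n).
    { apply Rmult_le_pos. left; apply Rinv_0_lt_compat, INR_fact_lt_0. apply pow_le; lra. }
    lra.
  - exact (proj2_sig (exist_exp y)).
Qed.


Lemma pois_sum_geom mu a K : 0 <= mu -> 0 <= a ->
  sum_f_R0 (fun k => pois mu k * a ^ k) K <= exp (- mu) * exp (mu * a).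
Proof.
  intros Hm Ha.
  rewrite (sum_eq _ (fun k => exp (-mu) * (/ INR (fact k) * (mu * a) ^ k))).
  - rewrite (sum_eq _ (fun k => (/ INR (fact k) * (mu * a) ^ k) * exp (-mu))) by (intros; ring).
    rewrite <- scal_sum.
    apply Rmult_le_compat_l. left; apply exp_pos.
    apply exp_partial. apply Rmult_le_pos; auto.
  - intros k _. unfold pois. rewrite Rpow_mult_distr. unfold Rdiv. ring.
Qed.

Lemma pois_sum_le1 mu K : 0 <= mu -> sum_f_R0 (fun k => pois mu k) K <= 1.
Proof.
  intro Hm. pose proof (pois_sum_geom mu 1 K Hm ltac:(lra)).
  rewrite (sum_eq _ (fun k => pois mu k * 1 ^ k)). 
  rewrite <- exp_plus in H. replace (- mu + mu * 1) with 0 in H by ring. rewrite exp_0 in H. exact H.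
  intros; rewrite pow1; ring.
Qed.

Lemma cfg_app mu K F L1 L2 N :
  cfg_sum mu K F (L1 ++ L2) N = cfg_sum mu K (fun N' => cfg_sum mu K F L2 N') L1 N.
Proof.
  revert N; induction L1 as [|[a b] L1 IH]; intro N; simpl; auto.
  apply sum_eq; intros; rewrite IH; auto.
Qed.

Lemma pois_nonneg mu k : 0 <= mu -> 0 <= pois mu k.
Proof.
  intro H. unfold pois. apply Rmult_le_pos. apply Rmult_le_pos. left; apply exp_pos.
  apply pow_le; auto. left; apply Rinv_0_lt_compat, INR_fact_lt_0.
Qed.

Definition mupos (mu : nat -> nat -> R) (L : list (nat*nat)) :=
  forall p, In p L -> 0 <= mu (fst p) (snd p).

Lemma mupos_cons mu p L : mupos mu (p :: L) -> mupos mu L.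
Proof. intros H q Hq; apply H; simpl; auto. Qed.

Lemma cfg_mono mu K L F G N : mupos mu L -> (forall N, F N <= G N) ->
  cfg_sum mu K F L N <= cfg_sum mu K G L N.
Proof.
  intros Hp HFG; revert N; induction L as [|[a b] L IH]; intro N; simpl; auto.
  apply sum_Rle; intros k _. apply Rmult_le_compat_l.
  apply pois_nonneg. apply (Hp (a,b)); simpl; auto.
  apply IH. eapply mupos_cons; eauto.
Qed.

Lemma cfg_add mu K L F G N :
  cfg_sum mu K (fun N => F N + G N) L N = cfg_sum mu K F L N + cfg_sum mu K G L N.
Proof.
  revert N; induction L as [|[a b] L IH]; intro N; simpl; auto.
  rewrite <- plus_sum. apply sum_eq; intros; rewrite IH; ring.
Qed.

Lemma cfg_factor mu K L H G N :
  (forall a b k N, In (a,b) L -> H (update N a b k) = H N) ->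
  cfg_sum mu K (fun N => H N * G N) L N = H N * cfg_sum mu K G L N.
Proof.
  intro HH; revert N; induction L as [|[a b] L IH]; intro N; simpl; auto.
  rewrite scal_sum. apply sum_eq; intros k _.
  rewrite IH. rewrite HH; simpl; auto. ring.
  intros; apply HH; simpl; auto.
Qed.



Lemma cfg_const mu K L c N : mupos mu L -> 0 <= c -> cfg_sum mu K (fun _ => c) L N <= c.
Proof.
  intros Hp Hc; revert N; induction L as [|[a b] L IH]; intro N; simpl; [lra|].
  apply Rle_trans with (sum_f_R0 (fun k => pois (mu a b) k * c) K).
  apply sum_Rle; intros k _. apply Rmult_le_compat_l.
  apply pois_nonneg. apply (Hp (a,b)); simpl; auto.
  apply IH. eapply mupos_cons; eauto.
  rewrite <- scal_sum. 
  pose proof (pois_sum_le1 (mu a b) K (Hp (a,b) ltac:(simpl; auto))).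
  rewrite Rmult_comm. replace c with (1 * c) at 2 by ring.
  apply Rmult_le_compat_r; auto.
Qed.

Lemma cfg_nonneg mu K L F N : mupos mu L -> (forall N, 0 <= F N) -> 0 <= cfg_sum mu K F L N.
Proof.
  intros Hp HF; revert N; induction L as [|[a b] L IH]; intro N; simpl; auto.
  apply cond_pos_sum; intro k. apply Rmult_le_pos.
  apply pois_nonneg. apply (Hp (a,b)); simpl; auto.
  apply IH. eapply mupos_cons; eauto.
Qed.

Lemma sum_swap (f : nat -> nat -> R) K1 K2 :
  sum_f_R0 (fun k => sum_f_R0 (fun k' => f k k') K2) K1 =
  sum_f_R0 (fun k' => sum_f_R0 (fun k => f k k') K1) K2.
Proof.
  induction K1 as [|K1 IH]; simpl.
  - apply sum_eq; auto.
  - rewrite IH. rewrite <- plus_sum. apply sum_eq; auto.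
Qed.

Lemma update_comm N a b c d k k' : (a,b) <> (c,d) ->
  update (update N a b k) c d k' = update (update N c d k') a b k.
Proof.
  intro Hne. apply functional_extensionality; intro x; apply functional_extensionality; intro y.
  unfold update.
  destruct (Nat.eqb_spec x c), (Nat.eqb_spec y d), (Nat.eqb_spec x a), (Nat.eqb_spec y b);
    simpl; subst; auto. congruence.
Qed.

Lemma cfg_perm mu K L L' : Permutation L L' -> forall F N,
  cfg_sum mu K F L N = cfg_sum mu K F L' N.
Proof.
  induction 1; intros F N; auto.
  - destruct x as [a b]; simpl. apply sum_eq; intros; rewrite IHPermutation; auto.
  - destruct x as [a b], y as [c d]; simpl.
    assert (Hd : {(a,b)=(c,d)}+{(a,b)<>(c,d)}) by (repeat decide equality).
    destruct Hd as [e|ne].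
    + injection e; intros; subst; reflexivity.
    + set (g := fun k k' => pois (mu c d) k * (pois (mu a b) k' *
                   cfg_sum mu K F l (update (update N c d k) a b k'))).
      transitivity (sum_f_R0 (fun k => sum_f_R0 (fun k' => g k k') K) K).
      { apply sum_eq; intros k _. rewrite scal_sum. apply sum_eq; intros; unfold g; ring. }
      rewrite sum_swap. apply sum_eq; intros k' _. rewrite scal_sum. apply sum_eq; intros k _.
      unfold g. rewrite update_comm; auto. ring.
  - rewrite IHPermutation1; auto.
Qed.

Lemma in_subtree i j a b : In (a,b) (subtree i j) <->
  (a <= i /\ j * 2^(i-a) <= b < j * 2^(i-a) + 2^(i-a))%nat.
Proof.
  unfold subtree. rewrite in_flat_map. split.
  - intros [x [Hx Hin]]. apply in_seq in Hx. apply in_map_iff in Hin.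
    destruct Hin as [y [Hy Hy']]. injection Hy; intros; subst. apply in_seq in Hy'. lia.
  - intros [H1 H2]. exists a; split. apply in_seq; lia.
    apply in_map_iff. exists b; split; auto. apply in_seq; lia.
Qed.

Lemma pow_pos2 m : (0 < 2 ^ m)%nat.
Proof. apply Nat.neq_0_lt_0, Nat.pow_nonzero; lia. Qed.

Lemma sub_child i j a b c : (c < 2)%nat ->
  In (a,b) (subtree i (2*j+c)) -> In (a,b) (subtree (S i) j).
Proof.
  intros Hc. rewrite !in_subtree. intros [H1 H2].
  replace (S i - a)%nat with (S (i - a)) by lia. rewrite Nat.pow_succ_r'.
  split. lia. nia.
Qed.

Lemma demand_local i : forall j N N',
  (forall a b, In (a,b) (subtree i j) -> N a b = N' a b) -> demand N i j = demand N' i j.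
Proof.
  induction i as [|i IH]; intros j N N' H.
  - assert (E : N 0%nat j = N' 0%nat j). { apply H. apply in_subtree. simpl. lia. }
    simpl. rewrite E. reflexivity.
  - cbn [demand]. rewrite (IH (2*j)%nat N N'), (IH (2*j+1)%nat N N').
    rewrite (H (S i) j). reflexivity.
    apply in_subtree. rewrite Nat.sub_diag. simpl. lia.
    intros; apply H; eapply sub_child with (c:=1%nat); eauto.
    intros; apply H; eapply sub_child with (c:=0%nat); eauto. rewrite Nat.add_0_r; auto.
Qed.

Lemma demand_update i j N a b k : ~ In (a,b) (subtree i j) ->
  demand (update N a b k) i j = demand N i j.
Proof.
  intro Hn. apply demand_local. intros a' b' Hin. unfold update.
  destruct (Nat.eqb_spec a' a), (Nat.eqb_spec b' b); simpl; subst; auto. contradiction.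
Qed.

Lemma flat_map_app_perm {A B} (f g : A -> list B) l :
  Permutation (flat_map (fun x => f x ++ g x) l) (flat_map f l ++ flat_map g l).
Proof.
  induction l as [|x l IH]; cbn [flat_map]; auto.
  rewrite <- !app_assoc. apply Permutation_app_head.
  eapply Permutation_trans. apply Permutation_app_head. exact IH.
  apply Permutation_app_swap_app.
Qed.

Lemma subtree_perm i j : Permutation (subtree (S i) j)
  (subtree i (2*j) ++ subtree i (2*j+1) ++ (S i, j) :: nil).
Proof.
  unfold subtree. rewrite (seq_S (S i)), flat_map_app.
  match goal with |- Permutation (_ ++ ?X) _ => assert (EX : X = (S i, j) :: nil) end.
  { simpl. rewrite Nat.sub_diag. simpl. rewrite Nat.mul_1_r. reflexivity. }
  rewrite EX.
  rewrite app_assoc. apply Permutation_app_tail.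
  set (f := fun i' : nat => map (fun j' => (i', j')) (seq (2*j * 2 ^ (i - i')) (2 ^ (i - i')))).
  set (g := fun i' : nat => map (fun j' => (i', j')) (seq ((2*j+1) * 2 ^ (i - i')) (2 ^ (i - i')))).
  eapply Permutation_trans; [|apply (flat_map_app_perm f g)].
  assert (Hl : forall x, In x (seq 0 (S i)) -> (x <= i)%nat) by (intros x Hx; apply in_seq in Hx; lia).
  revert Hl. generalize (seq 0 (S i)). intros l Hl.
  induction l as [|x l IH]; cbn [flat_map]; auto.
  assert (x <= i)%nat by (apply Hl; simpl; auto).
  replace (S i - x)%nat with (S (i - x)) by lia. rewrite Nat.pow_succ_r'.
  replace (2 * 2^(i-x))%nat with (2^(i-x) + 2^(i-x))%nat by lia.
  rewrite seq_app, map_app, <- app_assoc. unfold f, g.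
  replace (j * (2 ^ (i - x) + 2 ^ (i - x)))%nat with (2*j*2^(i-x))%nat by lia.
  replace (2 * j * 2 ^ (i - x) + 2 ^ (i - x))%nat with ((2*j+1)*2^(i-x))%nat by lia.
  rewrite <- app_assoc. apply Permutation_app_head, Permutation_app_head. apply IH.
  intros; apply Hl; simpl; auto.
Qed.

Lemma exple x y : x <= y -> exp x <= exp y.
Proof. intros [H|H]. left; apply exp_increasing; auto. subst; lra. Qed.

Lemma exp1_ge2 : 2 <= exp 1.
Proof. pose proof (exp_ineq1_le 1). lra. Qed.

Lemma expm1_pow k : exp (-1) ^ k = exp (- INR k).
Proof.
  induction k as [|k IH]. simpl. rewrite Ropp_0, exp_0; auto.
  rewrite S_INR. simpl. rewrite IH, <- exp_plus. f_equal. ring.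
Qed.

Lemma key_sum m A K : 12 <= m -> 0 <= A ->
  sum_f_R0 (fun k => pois m k * (A * exp (-1) ^ k)) K <= A * exp (-6).
Proof.
  intros Hm HA.
  rewrite (sum_eq _ (fun k => (pois m k * exp (-1) ^ k) * A)) by (intros; ring).
  rewrite <- scal_sum. apply Rmult_le_compat_l; auto.
  eapply Rle_trans. apply pois_sum_geom; [lra| left; apply exp_pos].
  rewrite <- exp_plus. apply exple.
  pose proof exp1_ge2.
  assert (E1 : exp (-1) * exp 1 = 1) by (rewrite <- exp_plus; replace (-1+1) with 0 by ring; apply exp_0).
  pose proof (exp_pos (-1)). nra.
Qed.

Lemma Phi_nonneg d : 0 <= exp (INR d) - 1.
Proof. pose proof (exp_ineq1_le (INR d)). pose proof (pos_INR d). lra. Qed.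

Lemma subtree0 j : subtree 0 j = (0%nat, j) :: nil.
Proof. unfold subtree. simpl. rewrite Nat.mul_1_r. reflexivity. Qed.

Lemma base_bound k : exp (INR (if orb (Nat.eqb k 1) (Nat.eqb k 2) then k else 0%nat)) - 1
   <= exp 4 * exp (-1) ^ k.
Proof.
  rewrite expm1_pow, <- exp_plus.
  destruct (Nat.eqb_spec k 1), (Nat.eqb_spec k 2); simpl orb; cbv iota.
  - subst. assert (exp (INR 1) <= exp (4 + - INR 1)) by (apply exple; simpl; lra). lra.
  - subst. assert (exp (INR 1) <= exp (4 + - INR 1)) by (apply exple; simpl; lra). lra.
  - subst. assert (exp (INR 2) <= exp (4 + - INR 2)) by (apply exple; simpl; lra). lra.
  - simpl INR. rewrite exp_0. pose proof (exp_pos (4 + - INR k)). lra.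
Qed.

Lemma step_bound a b k : exp (INR (a + b + 3 - k)) - 1
   <= exp 3 * exp (INR a) * exp (INR b) * exp (-1) ^ k.
Proof.
  rewrite expm1_pow, <- !exp_plus.
  destruct (Nat.le_gt_cases (a + b + 3) k).
  - replace (a + b + 3 - k)%nat with 0%nat by lia. simpl INR. rewrite exp_0.
    pose proof (exp_pos (3 + INR a + INR b + - INR k)). lra.
  - rewrite minus_INR by lia. rewrite !plus_INR. simpl INR.
    assert (exp (INR a + INR b + (1 + 1 + 1) - INR k) <= exp (3 + INR a + INR b + - INR k))
      by (apply exple; lra). lra.
Qed.

Lemma upd_self N a b k : update N a b k a b = k.
Proof. unfold update. rewrite !Nat.eqb_refl. reflexivity. Qed.

Lemma mupos_sub mu I i j : (forall a b, (a <= I)%nat -> 12 <= mu a b) -> (i <= I)%nat ->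
  mupos mu (subtree i j).
Proof.
  intros Hmu Hi [a b] Hin. apply in_subtree in Hin. simpl. pose proof (Hmu a b ltac:(lia)). lra.
Qed.

Lemma cfg_exp_le mu K L F N c : mupos mu L ->
  cfg_sum mu K (fun N => F N - 1) L N <= c ->
  cfg_sum mu K F L N <= 1 + c.
Proof.
  intros Hp H.
  replace F with (fun N => 1 + (F N - 1)) by (apply functional_extensionality; intro; ring).
  rewrite cfg_add. pose proof (cfg_const mu K L 1 N Hp ltac:(lra)). lra.
Qed.

Lemma exp_m3 : exp (-3) * (9/4) <= 1/2.
Proof.
  assert (E: exp (-3) * (exp 1 * exp 1 * exp 1) = 1).
  { rewrite <- !exp_plus. replace (-3 + (1+1+1)) with 0 by ring. apply exp_0. }
  pose proof exp1_ge2. pose proof (exp_pos (-3)).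
  assert (exp 1 * exp 1 * exp 1 >= 8) by nra. nra.
Qed.

Lemma exp_m2 : exp 4 * exp (-6) <= 1/2.
Proof.
  rewrite <- exp_plus.
  assert (E: exp (4 + -6) * (exp 1 * exp 1) = 1).
  { rewrite <- !exp_plus. replace (4 + -6 + (1+1)) with 0 by ring. apply exp_0. }
  pose proof exp1_ge2. pose proof (exp_pos (4 + -6)). nra.
Qed.

Lemma main_ind mu K I (Hmu : forall a b, (a <= I)%nat -> 12 <= mu a b) :
  forall i, (i <= I)%nat -> forall j N,
  cfg_sum mu K (fun N => exp (INR (demand N i j)) - 1) (subtree i j) N <= 1/2.
Proof.
  induction i as [|i IH]; intros Hi j N.
  - rewrite subtree0. simpl cfg_sum.
    eapply Rle_trans; [|apply exp_m2].
    eapply Rle_trans; [|apply (key_sum (mu 0%nat j) (exp 4) K)].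
    2: apply Hmu; lia. 2: left; apply exp_pos.
    apply sum_Rle; intros k _. apply Rmult_le_compat_l.
    pose proof (Hmu 0%nat j ltac:(lia)); apply pois_nonneg; lra.
    cbn [demand]. rewrite upd_self. apply base_bound.
  - set (dA := fun N => demand N i (2*j)).
    set (dB := fun N => demand N i (2*j+1)).
    assert (nAB : forall a b, In (a,b) (subtree i (2*j+1)) -> ~ In (a,b) (subtree i (2*j))).
    { intros a b H1 H2. apply in_subtree in H1, H2. nia. }
    assert (nx : forall c, ~ In (S i, j) (subtree i c)).
    { intros c H. apply in_subtree in H. lia. }
    rewrite (cfg_perm _ _ _ _ (subtree_perm i j)). rewrite cfg_app.
    assert (S1 : forall N1, cfg_sum mu K (fun N => exp (INR (demand N (S i) j)) - 1)
                 (subtree i (2*j+1) ++ (S i, j) :: nil) N1 <= exp (-3) * exp (INR (dA N1)) * (3/2)).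
    { intro N1. rewrite cfg_app.
      eapply Rle_trans.
      apply cfg_mono with (G := fun N2 => (exp (-3) * exp (INR (dA N2))) * exp (INR (dB N2))).
      apply (mupos_sub mu I); auto; lia.
      intro N2. simpl cfg_sum.
      eapply Rle_trans.
      2: { apply Req_le. 
           replace (exp (-3)) with (exp 3 * exp (-6)) by (rewrite <- exp_plus; f_equal; ring).
           instantiate (1 := exp 3 * exp (INR (dA N2)) * exp (INR (dB N2)) * exp (-6)). ring. }
      eapply Rle_trans; [|apply key_sum].
      apply sum_Rle; intros k _. apply Rmult_le_compat_l.
      pose proof (Hmu (S i) j ltac:(lia)); apply pois_nonneg; lra.
      cbn [demand]. rewrite upd_self. rewrite !demand_update by apply nx. apply step_bound.
      apply Hmu; lia.
      pose proof (exp_pos 3); pose proof (exp_pos (INR (dA N2))); pose proof (exp_pos (INR (dB N2))).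
      apply Rmult_le_pos; [apply Rmult_le_pos|]; lra.
      rewrite cfg_factor.
      2: { intros a b k N3 Hin. unfold dA. rewrite demand_update; auto. }
      apply Rmult_le_compat_l.
      pose proof (exp_pos (-3)); pose proof (exp_pos (INR (dA N1))). apply Rmult_le_pos; lra.
      replace (3/2) with (1 + 1/2) by field. apply cfg_exp_le.
      apply (mupos_sub mu I); auto; lia.
      apply IH; lia. }
    eapply Rle_trans. apply cfg_mono with (G := fun N1 => (exp (-3) * (3/2)) * (exp (INR (dA N1)))).
    apply (mupos_sub mu I); auto; lia.
    intro N1. eapply Rle_trans. apply S1. apply Req_le; ring.
    rewrite cfg_factor by auto.
    eapply Rle_trans; [|apply exp_m3].
    replace (exp (-3) * (9/4)) with (exp (-3) * (3/2) * (1 + 1/2)) by field.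
    apply Rmult_le_compat_l. pose proof (exp_pos (-3)); lra.
    apply cfg_exp_le. apply (mupos_sub mu I); auto; lia.
    apply IH; lia.
Qed.

Lemma prob_bound mu K i j t N : (forall a b, (a <= i)%nat -> 12 <= mu a b) -> 0 <= t ->
  cfg_sum mu K (fun N => if Rle_dec t (INR (demand N i j)) then 1 else 0) (subtree i j) N
  <= exp (- 1 * t).
Proof.
  intros Hmu Ht.
  assert (Hp : mupos mu (subtree i j)) by (apply (mupos_sub mu i); auto).
  destruct (Req_dec t 0) as [->|Htn].
  - replace (-1 * 0) with 0 by ring. rewrite exp_0.
    eapply Rle_trans. apply cfg_mono with (G := fun _ => 1); auto.
    intro N1. destruct Rle_dec; lra.
    apply cfg_const; auto; lra.
  - eapply Rle_trans.
    apply cfg_mono with (G := fun N1 => (exp (-1 * t) * 2) * (exp (INR (demand N1 i j)) - 1)); auto.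
    + intro N1. destruct Rle_dec as [Hle|Hle].
      * set (d := demand N1 i j) in *.
        assert (Hd : 1 <= INR d).
        { destruct d. simpl in Hle. lra. rewrite S_INR. pose proof (pos_INR d). lra. }
        assert (vw : exp (-1 * t) * exp (INR d) >= 1).
        { rewrite <- exp_plus. rewrite <- exp_0. apply Rle_ge, exple. lra. }
        assert (w2 : exp (INR d) >= 2).
        { pose proof exp1_ge2. pose proof (exple 1 (INR d) Hd). lra. }
        pose proof (exp_pos (-1 * t)). nra.
      * pose proof (exp_pos (-1 * t)). pose proof (Phi_nonneg (demand N1 i j)). nra.
    + rewrite cfg_factor by auto.
      pose proof (main_ind mu K i Hmu i (le_n _) j N). pose proof (exp_pos (-1 * t)). nra.
Qed.

Lemma pow2_exp m : 2 ^ m = exp (INR m * ln 2).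
Proof. rewrite <- ln_pow by lra. rewrite exp_ln; auto. apply pow_lt; lra. Qed.

Lemma ln2_pos : 0 < ln 2.
Proof. rewrite <- ln_1. apply ln_increasing; lra. Qed.

Lemma cosh_diff u v : 2 <= u -> u <= v ->
  (v - u) / 4 <= (v + / v) / 2 - (u + / u) / 2.
Proof.
  intros Hu Hv.
  assert (E : / u - / v = (v - u) * / (u * v)) by (field; lra).
  assert (I : / (u * v) <= / 4) by (apply Rinv_le_contravar; nra).
  assert (0 <= v - u) by lra.
  assert ((v - u) * / (u * v) <= (v - u) * / 4) by (apply Rmult_le_compat_l; auto).
  lra.
Qed.

Lemma cosh_m1 y : 0 < y -> 0 < cosh y - 1 <= exp y / 2.
Proof.
  intro Hy. unfold cosh. rewrite exp_Ropp.
  assert (E1 : 1 < exp y) by (rewrite <- exp_0; apply exp_increasing; auto).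
  assert (0 < / exp y < 1).
  { split. apply Rinv_0_lt_compat; lra. rewrite <- Rinv_1. apply Rinv_lt_contravar; lra. }
  split; [|lra].
  assert (exp y * / exp y = 1) by (field; lra).
  nra.
Qed.

Lemma mean_abstract n nu Nt C D E w z rho :
  0 < n -> 0 < nu -> 0 < Nt -> Nt <= 16 * z * n / nu -> 0 < D -> D <= E / 2 ->
  0 < E -> E * w * (1 - rho) / 4 <= C -> z <= w -> 0 < z -> rho < 1 -> 384 <= nu * (1 - rho) ->
  12 <= n * C / (Nt * D).
Proof.
  intros.
  apply Rmult_le_reg_r with (Nt * D). nra.
  unfold Rdiv. rewrite Rmult_assoc, Rinv_l, Rmult_1_r by nra.
  assert (Nt * nu <= 16 * z * n).
  { apply Rmult_le_reg_r with (/ nu). apply Rinv_0_lt_compat; auto.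
    rewrite Rmult_assoc, Rinv_r, Rmult_1_r by lra. exact H2. }
  assert (12 * (Nt * D) * nu <= 96 * z * n * E).
  { assert (0 <= (16 * z * n - Nt * nu) * D) by (apply Rmult_le_pos; lra).
    assert (0 <= (E / 2 - D) * (z * n)) by (apply Rmult_le_pos; nra).
    nra. }
  assert (n * (E * z * (1 - rho) / 4) <= n * C).
  { apply Rmult_le_compat_l. lra. eapply Rle_trans; [|exact H6].
    assert (E * z <= E * w) by nra. assert (0 < 1 - rho) by lra.
    apply Rmult_le_compat_r. lra. apply Rmult_le_compat_r; lra. }
  assert (96 * z * n * E <= n * (E * z * (1 - rho) / 4) * nu).
  { assert (0 <= (n * E * z) * (nu * (1 - rho) - 384)) by (apply Rmult_le_pos; [|lra]; 
       apply Rmult_le_pos; [|lra]; apply Rmult_le_pos; lra). nra. }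
  assert (n * (E * z * (1 - rho) / 4) * nu <= n * C * nu) by (apply Rmult_le_compat_r; lra).
  nra.
Qed.

Lemma mean_ge12 alpha nu n a :
  0 < alpha < 1/2 -> 0 < nu -> 384 <= nu * (1 - exp (- (2 * alpha * ln 2))) ->
  nu * exp ((30 + 5 / alpha) * ln 2) < INR n ->
  (Z.of_nat a <= imax nu n)%Z -> 12 <= tile_mean alpha nu n a.
Proof.
  intros Ha Hnu Hnus Hn Hai.
  pose proof ln2_pos as HL. set (L := ln 2) in *.
  assert (Hnpos : 0 < INR n) by (pose proof (exp_pos ((30 + 5 / alpha) * L)); nra).
  assert (Hq : exp ((30 + 5 / alpha) * L) < INR n / nu).
  { apply Rmult_lt_reg_l with nu; auto. replace (nu * (INR n / nu)) with (INR n) by (field; lra). lra. }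
  assert (Hqpos : 0 < INR n / nu) by (pose proof (exp_pos ((30 + 5 / alpha) * L)); lra).
  assert (Hlnq : (30 + 5 / alpha) * L < ln (INR n / nu)).
  { rewrite <- (ln_exp ((30 + 5 / alpha) * L)). apply ln_increasing; auto. apply exp_pos. }
  set (lq := ln (INR n / nu)) in *.
  assert (HR : Rad nu n = 2 * lq) by reflexivity.
  set (x := Rad nu n / (2 * L)).
  assert (Hx : x = lq / L) by (unfold x; rewrite HR; field; lra).
  assert (Hx1 : 30 + 5 / alpha < x).
  { rewrite Hx; apply Rmult_lt_reg_r with L; auto. replace (lq / L * L) with lq by (field; lra); lra. }
  assert (Hxl : x * L = lq) by (rewrite Hx; field; lra).
  assert (Ha1 : INR a < 9/10 * x + 1).
  { unfold imax, Rceil in Hai. apply IZR_le in Hai. rewrite <- INR_IZR_INZ in Hai.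
    rewrite opp_IZR in Hai.
    destruct (base_Int_part (- (9 / 10 * Rad nu n / (2 * ln 2)))) as [_ Hb].
    change (ln 2) with L in Hb, Hai.
    assert (9 / 10 * Rad nu n / (2 * L) = 9/10 * x) by (unfold x; field; lra).
    lra. }
  assert (H5a : 5 / alpha * alpha = 5) by (field; lra).
  destruct (base_Int_part x) as [Hf1 Hf2].
  set (e := (4 - Z.of_nat a + Rfloor x)%Z).
  assert (HeR : IZR e = 4 - INR a + IZR (Int_part x)).
  { unfold e, Rfloor. rewrite plus_IZR, minus_IZR, <- INR_IZR_INZ. reflexivity. }
  assert (He0 : (0 <= e)%Z).
  { apply le_IZR. rewrite HeR. assert (0 <= 5/alpha) by (apply Rlt_le, Rdiv_lt_0_compat; lra). lra. }
  assert (HNt : INR (ntiles nu n a) = exp (IZR e * L)).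
  { unfold ntiles. fold x. fold e. rewrite pow_INR. replace (INR 2) with 2 by (simpl; ring).
    rewrite pow2_exp. rewrite INR_IZR_INZ, Z2Nat.id; auto. }
  assert (Hz : INR (ntiles nu n a) <= 16 * exp (- INR a * L) * INR n / nu).
  { rewrite HNt.
    assert (E16 : exp (4 * L) = 16).
    { replace 4 with (INR 4) by (simpl; ring). rewrite <- pow2_exp. simpl; ring. }
    assert (Eq : exp (x * L) = INR n / nu) by (rewrite Hxl; apply exp_ln; auto).
    replace (16 * exp (- INR a * L) * INR n / nu) with (exp (4 * L + - INR a * L + x * L))
      by (rewrite !exp_plus, E16, Eq; field; lra).
    apply exple. rewrite HeR. nra. }
  assert (HRx : Rad nu n = 2 * x * L) by (rewrite HR, <- Hxl; ring).
  assert (Hr1 : L / alpha <= Rad nu n - 2 * (INR a + 1) * L).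
  { rewrite HRx. assert (L / alpha = 5 / alpha * L * / 5) by (field; lra). nra. }
  assert (HLa : 0 < L / alpha) by (apply Rdiv_lt_0_compat; lra).
  unfold tile_mean. cbv zeta. change (ln 2) with L.
  rewrite (Rmax_right 0 (Rad nu n - 2 * (INR a + 1) * L)) by lra.
  rewrite (Rmax_right 0 (Rad nu n - 2 * INR a * L)) by lra.
  set (r1 := Rad nu n - 2 * (INR a + 1) * L) in *.
  assert (Hr2 : Rad nu n - 2 * INR a * L = r1 + 2 * L) by (unfold r1; ring).
  rewrite Hr2.
  assert (Hu : 2 <= exp (alpha * r1)).
  { replace 2 with (exp L) by (apply exp_ln; lra). apply exple.
    replace L with (alpha * (L / alpha)) at 1 by (field; lra). apply Rmult_le_compat_l; lra. }
  assert (Huv : exp (alpha * r1) <= exp (alpha * (r1 + 2 * L))) by (apply exple; nra).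
  apply (mean_abstract _ nu _ _ _ (exp (alpha * Rad nu n)) (exp (- (2 * alpha * INR a * L)))
           (exp (- INR a * L)) (exp (- (2 * alpha * L)))); auto.
  - rewrite HNt; apply exp_pos.
  - apply cosh_m1. rewrite HRx. assert (0 < x) by (assert (0 <= 5/alpha) by (apply Rlt_le, Rdiv_lt_0_compat; lra); lra).
    apply Rmult_lt_0_compat; [lra|]. nra.
  - apply cosh_m1. rewrite HRx. assert (0 < x) by (assert (0 <= 5/alpha) by (apply Rlt_le, Rdiv_lt_0_compat; lra); lra).
    apply Rmult_lt_0_compat; [lra|]. nra.
  - apply exp_pos.
  - unfold cosh. rewrite !exp_Ropp.
    eapply Rle_trans; [|apply cosh_diff; auto].
    apply Req_le.
    replace (exp (alpha * (r1 + 2 * L))) with (exp (alpha * Rad nu n) * exp (- (2 * alpha * INR a * L)))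
      by (rewrite <- exp_plus; f_equal; unfold r1; ring).
    replace (exp (alpha * r1)) with (exp (alpha * Rad nu n) * exp (- (2 * alpha * INR a * L)) * exp (- (2 * alpha * L)))
      by (rewrite <- !exp_plus; f_equal; unfold r1; ring).
    rewrite !exp_Ropp. field. pose proof (exp_pos (2 * alpha * INR a * L)); pose proof (exp_pos (2 * alpha * L)); lra.
  - apply exple. pose proof (pos_INR a). assert (0 <= INR a * L) by (apply Rmult_le_pos; lra). nra.
  - apply exp_pos.
  - rewrite <- exp_0. apply exp_increasing. nra.
Qed.

Theorem mainTheorem12 :
  exists c : R, 0 < c /\
  forall alpha : R, 0 < alpha < 1 / 2 ->
  exists nustar : R,
  forall nu : R, nustar < nu -> 0 < nu ->
  exists n0 : nat,
  forall n : nat, (n0 <= n)%nat -> nu < INR n ->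
  forall i j : nat, admissible nu n i j ->
  forall t : R, 0 <= t ->
  prob_demand_ge_le alpha nu n i j t (exp (- c * t)).
Proof.
  exists 1. split; [lra|]. intros alpha Ha.
  set (rho := exp (- (2 * alpha * ln 2))).
  assert (Hrho : 0 < 1 - rho).
  { unfold rho. rewrite <- exp_0. pose proof ln2_pos.
    assert (exp (- (2 * alpha * ln 2)) < exp 0) by (apply exp_increasing; nra). lra. }
  exists (384 / (1 - rho)). intros nu Hnus Hnu.
  assert (H384 : 384 <= nu * (1 - rho)).
  { apply Rmult_lt_compat_r with (r := 1 - rho) in Hnus; auto.
    unfold Rdiv in Hnus. rewrite Rmult_assoc, Rinv_l, Rmult_1_r in Hnus; lra. }
  set (y := nu * exp ((30 + 5 / alpha) * ln 2)).
  assert (Hy : 0 < y) by (unfold y; pose proof (exp_pos ((30 + 5 / alpha) * ln 2)); nra).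
  exists (Z.to_nat (up y)). intros n Hn0 Hn i j Hadm t Ht.
  assert (Hyn : y < INR n).
  { destruct (archimed y) as [H1 _].
    assert (0 <= up y)%Z by (apply le_IZR; lra).
    apply le_INR in Hn0. rewrite INR_IZR_INZ, Z2Nat.id in Hn0 by auto. lra. }
  intro K. unfold prob_trunc.
  replace (- (1) * t) with (- 1 * t) by ring.
  apply prob_bound; auto.
  intros a b Hai. apply mean_ge12; auto.
  destruct Hadm as [Hi _]. lia.
Qed.
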